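(* Let $R$ be a fixed $R$-transform and, for $t \ge 0$, set $R(t,z) \coloneqq R(z e^{t})$. Let $m(t,z)$ denote the Stieltjes transform whose $R$-transform is $R(t,\cdot)$, and let $\omega(t,\cdot)$ denote its functional inverse (so that $m(t,\omega(t,z)) = z$), assumed differentiable in $(t,z)$. Then $m$ satisfies the partial differential equation \[ \frac{\partial m}{\partial t}(t,z) = -m(t,z) + \frac{1}{m(t,z)}\,\frac{\partial m}{\partial z}(t,z). \]
   Context: For a probability density $\rho$ on $\mathbb{R}$, its Stieltjes transform is $m(z) = \int_{\mathbb{R}} \frac{\rho(x)}{x-z}\,\mathrm{d}x$ for $z \in \mathbb{C}^{+} = \{\Im z > 0\}$. Letting $\omega$ denote the functional inverse of $m$ (i.e. $m(\omega(z)) = z$), the $R$-transform is $R(z) = \omega(-z) - z^{-1}$. Thus ''the Stieltjes transform corresponding to the $R$-transform $R(t,\cdot)$'' means the function $m(t,\cdot)$ with inverse $\omega(t,\cdot)$ satisfying $R(t,z) = \omega(t,-z) - z^{-1}$. *)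

(* Defs.v *)
From mathcomp Require Import all_boot all_algebra.
From mathcomp Require Import all_classical all_reals all_analysis.
From mathcomp Require Export complex.
Set Implicit Arguments. Unset Strict Implicit. Unset Printing Implicit Defensive.
Import GRing.Theory Num.Theory.
Local Open Scope ring_scope.
Local Open Scope complex_scope.

Section Defs.
Variable R : realType.

Definition is_prob_density (rho : R -> R) : Prop :=
  [/\ measurable_fun setT rho, (forall x, 0 <= rho x) &
      (\int[lebesgue_measure]_x (rho x)%:E = 1)%E].

(* Stieltjes transform m(z) = \int rho(x)/(x - z) dx, written via real and
   imaginary parts: 1/(x - z) = ((x - a) + i b)/((x - a)^2 + b^2), z = a + i b. *)
Definition stieltjes (rho : R -> R) (z : R[i]) : R[i] :=
  let a := complex.Re z in let b := complex.Im z in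
  (Rintegral lebesgue_measure setT
     (fun x => rho x * (x - a) / ((x - a) ^+ 2 + b ^+ 2)))%:C
  + 'i * (Rintegral lebesgue_measure setT
     (fun x => rho x * b / ((x - a) ^+ 2 + b ^+ 2)))%:C.

(* R-transform from the functional inverse om of m: R(z) = om(-z) - z^-1. *)
Definition Rtransform (om : R[i] -> R[i]) (z : R[i]) : R[i] := om (- z) - z^-1.

(* Joint (Frechet) differentiability of f : [0,oo) x C -> C at (t,z), with
   partial derivative a in t (one-sided at t = 0) and complex partial
   derivative b in z. *)
Definition jdiff (f : R -> R[i] -> R[i]) (t : R) (z a b : R[i]) : Prop :=
  forall e : R, 0 < e -> exists d : R, 0 < d /\
    forall (s : R) (w : R[i]), 0 <= s -> `|s - t| < d -> `|w - z| < d%:C ->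
      `|f s w - f t z - a * (s - t)%:C - b * (w - z)|
        <= e%:C * ((`|s - t|)%:C + `|w - z|).

Definition is_dt (f : R -> R[i] -> R[i]) (t : R) (z a : R[i]) : Prop :=
  forall e : R, 0 < e -> exists d : R, 0 < d /\
    forall s : R, 0 <= s -> `|s - t| < d ->
      `|f s z - f t z - a * (s - t)%:C| <= e%:C * (`|s - t|)%:C.

Definition is_dz (f : R -> R[i] -> R[i]) (t : R) (z b : R[i]) : Prop :=
  forall e : R, 0 < e -> exists d : R, 0 < d /\
    forall w : R[i], `|w - z| < d%:C ->
      `|f t w - f t z - b * (w - z)| <= e%:C * `|w - z|.

End Defs.

(* Main.v *)
Require Import Defs.
From mathcomp Require Import all_boot all_algebra.
From mathcomp Require Import all_classical all_reals all_analysis.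
From mathcomp Require Import complex.
From mathcomp Require Import ring lra measurable_realfun.
Set Implicit Arguments. Unset Strict Implicit.
Import order.Order.TTheory GRing.Theory Num.Theory.
Local Open Scope ring_scope.
Import numFieldNormedType.Exports.
Local Open Scope complex_scope.

Section S.
Variable R : realType.
Implicit Types x y z : R[i].

Definition nr (z : R[i]) : R := complex.Re `|z|.

Lemma normC_real z : `|z| = (nr z)%:C.
Proof.
by rewrite /nr normc_def.
Qed.

Lemma nr_ge0 z : 0 <= nr z.
Proof. by rewrite -ler0c -normC_real. Qed.

Lemma le_nr z r : (`|z| <= r%:C) = (nr z <= r).
Proof. by rewrite normC_real lecR. Qed.

Lemma lt_nr z r : (`|z| < r%:C) = (nr z < r).
Proof. by rewrite normC_real ltcR. Qed.

Lemma nrD x y : nr (x + y) <= nr x + nr y.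
Proof. by rewrite -le_nr rmorphD /= -!normC_real ler_normD. Qed.

Lemma nrM x y : nr (x * y) = nr x * nr y.
Proof. by apply: complexI; rewrite rmorphM /= -!normC_real normrM. Qed.

Lemma nrN x : nr (- x) = nr x.
Proof. by rewrite /nr normrN. Qed.

Lemma nrC (r : R) : nr r%:C = `|r|.
Proof. by apply: complexI; rewrite -normC_real normc_def /= expr0n /= addr0 sqrtr_sqr. Qed.

Lemma nr_eq0 x : nr x = 0 -> x = 0.
Proof. by move=> h; apply/eqP; rewrite -normr_eq0 normC_real h. Qed.

Lemma nr0 : nr 0 = 0.
Proof. by rewrite /nr normr0. Qed.

Definition Dir (g : R -> R[i]) (L : R[i]) := forall e : R, 0 < e ->
  exists d : R, 0 < d /\ forall h : R, 0 < h -> h < d ->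
    nr (g h - g 0 - h%:C * L) <= e * h.

Lemma Dir_uniq g L1 L2 : Dir g L1 -> Dir g L2 -> L1 = L2.
Proof.
move=> H1 H2; apply/eqP; rewrite -subr_eq0; apply/eqP; apply: nr_eq0.
set r := nr (L1 - L2).
have r0 : 0 <= r by exact: nr_ge0.
apply/eqP; rewrite eq_le r0 andbT; apply/negP => /negP; rewrite -ltNge => rpos.
have e0 : 0 < r / 4 by rewrite divr_gt0.
have [d1 [d10 Hd1]] := H1 _ e0; have [d2 [d20 Hd2]] := H2 _ e0.
set h := Num.min d1 d2 / 2.
have hm : 0 < Num.min d1 d2 by rewrite lt_min d10 d20.
have h0 : 0 < h by rewrite divr_gt0.
have hd1 : h < d1.
  apply: (@lt_le_trans _ _ (Num.min d1 d2)); first by rewrite /h ltr_pdivrMr // ltr_pMr // ltr1n.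
  by rewrite ge_min lexx.
have hd2 : h < d2.
  apply: (@lt_le_trans _ _ (Num.min d1 d2)); first by rewrite /h ltr_pdivrMr // ltr_pMr // ltr1n.
  by rewrite ge_min lexx orbT.
have A := Hd1 _ h0 hd1; have B := Hd2 _ h0 hd2.
have : nr (h%:C * (L1 - L2)) <= r / 4 * h + r / 4 * h.
  have -> : h%:C * (L1 - L2) = - (g h - g 0 - h%:C * L1) + (g h - g 0 - h%:C * L2) by ring.
  by apply: (le_trans (nrD _ _)); rewrite nrN lerD.
move=> H; rewrite nrM nrC ger0_norm in H; last exact: ltW.
have hr : 0 < h * r by rewrite mulr_gt0.
lra.
Qed.

Lemma Dir_ext g g' L : (exists d : R, 0 < d /\ forall h, 0 < h -> h < d -> g h = g' h) ->
  g 0 = g' 0 -> Dir g L -> Dir g' L.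
Proof.
move=> [d0 [d00 Hd0]] E0 H e e0; have [d [d0' Hd]] := H e e0.
exists (Num.min d d0); split; first by rewrite lt_min d0' d00.
move=> h h0; rewrite lt_min => /andP[hd hd0].
by rewrite -Hd0 // -E0; apply: Hd.
Qed.

Lemma Dir_const k : Dir (fun _ => k) 0.
Proof.
move=> e e0; exists 1; split => // h h0 _.
by rewrite mulr0 !subr0 subrr nr0 mulr_ge0 // ltW.
Qed.

Lemma Dir_lin k v : Dir (fun h => k + h%:C * v) v.
Proof.
move=> e e0; exists 1; split => // h h0 _.
have -> : k + h%:C * v - (k + (0:R)%:C * v) - h%:C * v = 0 by rewrite mul0r; ring.
by rewrite nr0 mulr_ge0 // ltW.
Qed.

Lemma Dir_affine g L c k : Dir g L -> Dir (fun h => c * g h + k) (c * L).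
Proof.
move=> H e e0.
have e1 : 0 < e / (nr c + 1) by rewrite divr_gt0 // ltr_pwDr // nr_ge0.
have [d [d0 Hd]] := H _ e1; exists d; split => // h h0 hd.
have -> : c * g h + k - (c * g 0 + k) - h%:C * (c * L) = c * (g h - g 0 - h%:C * L) by ring.
rewrite nrM; apply: (le_trans (ler_wpM2l (nr_ge0 _) (Hd _ h0 hd))).
rewrite mulrA ler_wpM2r ?ltW //.
have c0 := nr_ge0 c.
by rewrite mulrA ltr_pdivrMr ?ltr_pwDr //; nra.
Qed.

Definition jdiffR (f : R -> R[i] -> R[i]) t z a b := forall e : R, 0 < e ->
  exists d : R, 0 < d /\ forall (s : R) (w : R[i]), 0 <= s -> `|s - t| < d ->
    nr (w - z) < d ->
    nr (f s w - f t z - a * (s - t)%:C - b * (w - z)) <= e * (`|s - t| + nr (w - z)).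

Lemma jdiffRP f t z a b : jdiff f t z a b -> jdiffR f t z a b.
Proof.
move=> H e e0; have [d [d0 Hd]] := H e e0; exists d; split => // s w s0 st wz.
rewrite -le_nr.
have -> : (e * (`|s - t| + nr (w - z)))%:C = e%:C * (`|s - t|%:C + `|w - z|).
  by rewrite (normC_real (w - z)) -rmorphD -rmorphM.
by apply: Hd => //; rewrite lt_nr.
Qed.

Lemma chain f t0 z0 p q (c : R -> R[i]) nu (sg : R) :
  jdiffR f t0 z0 p q -> 0 <= t0 -> 0 <= sg -> Dir c nu -> c 0 = z0 ->
  Dir (fun h => f (t0 + h * sg) (c h)) (p * sg%:C + q * nu).
Proof.
move=> J t00 sg0 Hc c0 e e0.
set S := sg + nr nu + 1.
have S0 : 0 < S by rewrite /S; have := nr_ge0 nu; lra.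
set Q := nr q + 1.
have Q0 : 0 < Q by rewrite /Q; have := nr_ge0 q; lra.
have e1p : 0 < e / (2 * S) by rewrite divr_gt0 // mulr_gt0.
have e2p : 0 < Num.min 1 (e / (2 * Q)) by rewrite lt_min ltr01 divr_gt0 // mulr_gt0.
have [d1 [d10 Hd1]] := J _ e1p.
have [d2 [d20 Hd2]] := Hc _ e2p.
exists (Num.min d2 (d1 / S)); split; first by rewrite lt_min d20 divr_gt0.
move=> h h0; rewrite lt_min => /andP[hd2 hdS].
have hS : h * S < d1 by rewrite -ltr_pdivlMr.
have X := Hd2 _ h0 hd2.
set e2 := Num.min 1 (e / (2 * Q)) in X e2p.
have e21 : e2 <= 1 by rewrite ge_min lexx.
have e2Q : e2 <= e / (2 * Q) by rewrite ge_min lexx orbT.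
rewrite c0 in X.
have nX : nr (c h - z0) <= h * (nr nu + 1).
  have -> : c h - z0 = (c h - z0 - h%:C * nu) + h%:C * nu by ring.
  apply: (le_trans (nrD _ _)); rewrite nrM nrC (ger0_norm (ltW h0)).
  have : e2 * h <= h by apply: ler_piMl => //; exact: ltW.
  lra.
have hsg : `|t0 + h * sg - t0| = h * sg.
  by rewrite addrC addKr ger0_norm // mulr_ge0 // ltW.
have Y := Hd1 (t0 + h * sg) (c h).
rewrite hsg in Y.
have nn := nr_ge0 nu.
have hsgS : h * sg <= h * S by apply: ler_wpM2l; [exact: ltW| rewrite /S; lra].
have hnS : h * (nr nu + 1) <= h * S by apply: ler_wpM2l; [exact: ltW| rewrite /S; lra].
have Y' := Y (addr_ge0 t00 (mulr_ge0 (ltW h0) sg0)) (le_lt_trans hsgS hS) (le_lt_trans (le_trans nX hnS) hS).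
have E : t0 + h * sg - t0 = h * sg by ring.
rewrite E in Y'; rewrite mul0r addr0 c0.
set F := f (t0 + h * sg) (c h) in Y' *.
have -> : F - f t0 z0 - h%:C * (p * sg%:C + q * nu) =
  (F - f t0 z0 - p * (h * sg)%:C - q * (c h - z0)) + q * (c h - z0 - h%:C * nu).
  by rewrite rmorphM /=; ring.
apply: (le_trans (nrD _ _)); rewrite nrM.
have B1 : e / (2 * S) * (h * sg + nr (c h - z0)) <= e * h / 2.
  have -> : e * h / 2 = e / (2 * S) * (h * S).
  by field; exact: lt0r_neq0 S0.
  apply: ler_wpM2l; first exact: ltW e1p.
  rewrite /S; lra.
have B2 : nr q * nr (c h - z0 - h%:C * nu) <= e * h / 2.
  apply: (le_trans (ler_wpM2l (nr_ge0 q) X)).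
  have : nr q * e2 <= e / 2.
    apply: (le_trans (ler_wpM2l (nr_ge0 q) e2Q)).
    rewrite mulrA ler_pdivrMr ?mulr_gt0 //.
    rewrite /Q; have := nr_ge0 q; nra.
  nra.
lra.
Qed.


Lemma Dir_real (u : R -> R) (l : R) :
  (forall e : R, 0 < e -> exists d : R, 0 < d /\ forall h : R, 0 < h -> h < d ->
     `|u h - u 0 - h * l| <= e * h) ->
  Dir (fun h => (u h)%:C) l%:C.
Proof.
move=> H e e0; have [d [d0 Hd]] := H e e0; exists d; split => // h h0 hd.
by rewrite -rmorphM -!rmorphB nrC; apply: Hd.
Qed.

Lemma Dir_exp : Dir (fun h => (expR h)%:C) 1.
Proof.
apply: (@Dir_real expR 1) => e e0.
exists (Num.min (1/2) (e/2)); split; first by rewrite lt_min; apply/andP; split; lra.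
move=> h h0; rewrite lt_min => /andP[h1 h2].
rewrite expR0 mulr1.
have A := expR_ge1Dx h; have B := expR_ge1Dx (- h); have C := expRxMexpNx_1 h.
set y := expR h in A C *; set u := expR (- h) in B C.
have D : (y - 1) * (1 - h) <= h by nra.
have E : y - 1 <= 2 * h by nra.
rewrite ger0_norm; last lra.
nra.
Qed.

Lemma Dir_expN : Dir (fun h => (expR (- h))%:C) (- 1).
Proof.
have -> : (-1 : R[i]) = (-1 : R)%:C by rewrite rmorphN rmorph1.
apply: (@Dir_real (fun h => expR (- h)) (-1)) => e e0.
exists e; split => // h h0 he.
rewrite oppr0 expR0 mulrN1.
have A := expR_ge1Dx h; have B := expR_ge1Dx (- h); have C := expRxMexpNx_1 h.
set y := expR h in A C *; set u := expR (- h) in B C *.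
rewrite opprK ger0_norm; last lra.
have u0 : 0 < u by exact: expR_gt0.
have F : u * (1 + h) <= 1 by nra.
have G : u - 1 + h <= h * h by nra.
nra.
Qed.

End S.
Lemma cont_g (R : realType) (a b : R) : b != 0 -> continuous (fun x : R => b / ((x - a) ^+ 2 + b ^+ 2)).
Proof.
move=> b0 x.
have s0 : (x - a) ^+ 2 + b ^+ 2 != 0.
  by rewrite lt0r_neq0 // ltr_wpDl ?sqr_ge0 // exprn_even_gt0 // b0.
apply: (@continuousM _ _ (fun=> b) (fun x => ((x - a) ^+ 2 + b ^+ 2)^-1)); first exact: cst_continuous.
apply: (@continuousV _ _ (fun x => ((x - a) ^+ 2 + b ^+ 2))) => //.
apply: (@continuousD _ _ _ (fun x => (x - a) ^+ 2) (fun=> b ^+ 2)); last exact: cst_continuous.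
have ca : {for x, continuous (fun x : R => x - a)}.
  apply: (@continuousB _ _ _ id (fun=> a)) => //; exact: cst_continuous.
have -> : (fun x : R => (x - a) ^+ 2) = (fun x => x - a) \* (fun x => x - a).
  by apply: funext => y; rewrite /= expr2.
exact: (@continuousM _ _ (fun x => x - a) (fun x => x - a)).
Qed.

Lemma Rint_pos (R : realType) (rho : R -> R) (a b : R) : is_prob_density rho -> 0 < b ->
  0 < Rintegral lebesgue_measure setT (fun x => rho x * b / ((x - a) ^+ 2 + b ^+ 2)).
Proof.
case=> mrho rho0 int1 b0.
set g := fun x : R => b / ((x - a) ^+ 2 + b ^+ 2).
have gpos x : 0 < g x by rewrite /g divr_gt0 // ltr_wpDl ?sqr_ge0 // exprn_gt0.
have gle x : g x <= b^-1.
  rewrite /g ler_pdivrMr ?ltr_wpDl ?sqr_ge0 ?exprn_gt0 //.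
  have H : b ^+ 2 <= (x - a) ^+ 2 + b ^+ 2 by rewrite lerDr sqr_ge0.
  apply: le_trans (ler_wpM2l _ H); last by rewrite invr_ge0 ltW.
  by rewrite expr2 mulKf // lt0r_neq0.
set f := fun x => rho x * b / ((x - a) ^+ 2 + b ^+ 2).
have fE : f = rho \* g by apply: funext => x; rewrite /f /g /= mulrA.
have mf : measurable_fun setT f.
  rewrite fE; apply: measurable_realfun.measurable_funM => //.
  by apply: measurable_realfun.continuous_measurable_fun; apply: cont_g; rewrite lt0r_neq0.
have f0 x : 0 <= f x by rewrite fE /= mulr_ge0 // ltW.
rewrite /Rintegral; apply: fine_gt0; apply/andP; split.
- rewrite lt_neqAle integral_ge0 ?andbT; last by move=> x _; rewrite lee_fin.
  apply/negP => /eqP /esym I0.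
  have mEf : measurable_fun setT (EFin \o f) by exact: measurableT_comp.
  have H : ae_eq lebesgue_measure setT (EFin \o f) (cst 0%E).
    apply/(ae_eq_integral_abs lebesgue_measure measurableT mEf).
    rewrite -I0; apply: eq_integral => x _; by rewrite gee0_abs // lee_fin.
  have H2 : ae_eq lebesgue_measure setT (EFin \o rho) (cst 0%E).
    apply: filterS H => x /= h _; have := h I => /eqP; rewrite eqe fE /= mulf_eq0.
    by case/orP => /eqP hx; [rewrite hx | exfalso; have := gpos x; rewrite hx; lra].
  have := @ae_eq_integral _ _ _ lebesgue_measure setT (cst 0%E) (EFin \o rho) measurableT (ltac:(exact: measurableT_comp)) (measurable_cst _) H2.
  by rewrite integral0 int1 => -[] /eqP; rewrite oner_eq0.
- apply: (@le_lt_trans _ _ ((b^-1)%:E)%E); last by rewrite ltey.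

  apply: (@le_trans _ _ (\int[lebesgue_measure]_(x in setT) ((b^-1)%:E * (rho x)%:E))%E).
    apply: ge0_le_integral => //.
    - by move=> x _; rewrite lee_fin.
    - exact: measurableT_comp.
    - by apply: measurable_funeM; exact: measurableT_comp.
    - by move=> x _; rewrite -EFinM lee_fin fE /= mulrC ler_wpM2r.
  rewrite ge0_integralZl //.
  - by rewrite int1 mule1.
  - exact: measurableT_comp.
  - by move=> x _; rewrite lee_fin.
  - by rewrite lee_fin invr_ge0 ltW.
Qed.

Lemma stieltjes_neq0 (R : realType) (rho : R -> R) (z : R[i]) :
  is_prob_density rho -> 0 < complex.Im z -> stieltjes rho z != 0.
Proof.
move=> Hr Hz; apply/eqP => E.
have := @Rint_pos R rho (complex.Re z) (complex.Im z) Hr Hz.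
have : complex.Im (stieltjes rho z) = 0 by rewrite E.
rewrite /stieltjes /= mul0r add0r mul1r add0r => ->; by rewrite ltxx.
Qed.

Lemma dt_Dir (R : realType) (f : R -> R[i] -> R[i]) t z a :
  0 <= t -> is_dt f t z a -> Dir (fun h => f (t + h * 1) z) a.
Proof.
move=> t0 H e e0; have [d [d0 Hd]] := H e e0; exists d; split => // h h0 hd.
rewrite mul0r addr0 mulr1.
have hs : `|t + h - t| = h by rewrite addrC addKr ger0_norm // ltW.
have := Hd (t + h) (addr_ge0 t0 (ltW h0)); rewrite hs => /(_ hd).
have E : t + h - t = h by rewrite addrC addKr.
by rewrite E -rmorphM le_nr mulrC.
Qed.

Lemma dz_Dir (R : realType) (f : R -> R[i] -> R[i]) t z b :
  is_dz f t z b -> Dir (fun h => f (t + h * 0) (z + h%:C * 1)) b.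
Proof.
move=> H e e0; have [d [d0 Hd]] := H e e0; exists d; split => // h h0 hd.
rewrite !mulr0 !addr0 mulr1 rmorph0 mul0r addr0.
have hs : `|z + h%:C - z| = h%:C by rewrite addrC addKr normC_real nrC ger0_norm // ltW.
have := Hd (z + h%:C); rewrite hs ltcR => /(_ hd).
move=> H1; rewrite -rmorphM le_nr mulrC in H1.
have E : z + h%:C - z = h%:C by rewrite addrC addKr.
by rewrite E in H1.
Qed.

Lemma lin0 (R : realType) (k v : R[i]) : k + (0:R)%:C * v = k.
Proof. by rewrite rmorph0 mul0r addr0. Qed.

Theorem proposition1 (R : realType) (R0 : R[i] -> R[i])
  (rho : R -> R -> R) (m omega : R -> R[i] -> R[i]) (D : R -> R[i] -> Prop)
  (Hrho : forall t, 0 <= t -> is_prob_density (rho t))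
  (Hm : forall t z, 0 <= t -> 0 < complex.Im z -> m t z = stieltjes (rho t) z)
  (HD : forall t w, D t w -> 0 <= t /\ exists d : R, 0 < d /\
          forall s w', 0 <= s -> `|s - t| < d -> `|w' - w| < d%:C -> D s w')
  (Hinv : forall t w, D t w -> 0 < complex.Im (omega t w) /\ m t (omega t w) = w)
  (HR : forall t z, D t (- z) -> z != 0 ->
          Rtransform (omega t) z = R0 (z * (expR t)%:C))
  (Hmdiff : forall t z, 0 <= t -> 0 < complex.Im z -> exists a b, jdiff m t z a b)
  (Hodiff : forall t w, D t w -> exists a b, jdiff omega t w a b) :
  forall t w, D t w ->
    forall a b, is_dt m t (omega t w) a -> is_dz m t (omega t w) b ->
      a = - m t (omega t w) + (m t (omega t w))^-1 * b.
Proof.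
move=> t w Dtw a b Hdt Hdz.
have [t0 [d0 [d00 Hd0]]] := HD t w Dtw.
have [Imz mz] := Hinv t w Dtw.
set z := omega t w in Imz mz Hdt Hdz *.
have w0 : w != 0 by rewrite -mz (Hm t z t0 Imz); apply: stieltjes_neq0 => //; exact: Hrho.
have [a' [b' Jm]] := Hmdiff t z t0 Imz.
have JmR := jdiffRP Jm.
have Ea : a' = a.
  apply: Dir_uniq (dt_Dir t0 Hdt).
  have := chain JmR t0 ler01 (Dir_const z) erefl.
  by rewrite rmorph1 mulr1 mulr0 addr0.
have Eb : b' = b.
  apply: Dir_uniq (dz_Dir Hdz).
  have := chain JmR t0 (lexx 0) (Dir_lin z 1) (lin0 z 1).
  by rewrite rmorph0 mulr0 add0r mulr1.
rewrite {}Ea {}Eb in JmR.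
have [al [be Jo]] := Hodiff t w Dtw.
have JoR := jdiffRP Jo.
have S1 : a + b * al = 0.
  have Ho := chain JoR t0 ler01 (Dir_const w) erefl.
  rewrite rmorph1 mulr1 mulr0 addr0 in Ho.
  have c0 : omega (t + 0 * 1) w = z by rewrite mul0r addr0.
  have Hc := chain JmR t0 ler01 Ho c0.
  rewrite rmorph1 mulr1 in Hc.
  apply: Dir_uniq Hc (Dir_ext _ _ (Dir_const w)).
  - exists d0; split => // h h0 hd.
    have Dh : D (t + h * 1) w.
      apply: Hd0; first by rewrite mulr1 addr_ge0 // ltW.
      + by rewrite mulr1 addrC addKr ger0_norm // ltW.
      + by rewrite subrr normr0 ltcR.
    by have [_ ->] := Hinv _ _ Dh.
  - by rewrite /= mul0r addr0.
have S2 : b * be = 1.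
  have Ho := chain JoR t0 (lexx 0) (Dir_lin w 1) (lin0 w 1).
  rewrite rmorph0 mulr0 add0r mulr1 in Ho.
  have c0 : omega (t + 0 * 0) (w + (0:R)%:C * 1) = z by rewrite mul0r addr0 lin0.
  have Hc := chain JmR t0 (lexx 0) Ho c0.
  rewrite rmorph0 mulr0 add0r in Hc.
  have := Dir_uniq Hc (Dir_ext _ _ (Dir_lin w 1)); apply.
  - exists d0; split => // h h0 hd.
    have Dh : D (t + h * 0) (w + h%:C * 1).
      apply: Hd0; first by rewrite mulr0 addr0.
      + by rewrite mulr0 addr0 subrr normr0.
      + by rewrite mulr1 addrC addKr normC_real nrC ger0_norm ?ltcR // ltW.
    by have [_ ->] := Hinv _ _ Dh.
  - by rewrite /= !mul0r !addr0.
have S3 : al * (1:R)%:C + be * (w * -1) = - w^-1 * 1.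
  have Hc0 := Dir_affine w 0 (@Dir_expN R).
  have c0 : w * (expR (- 0))%:C + 0 = w by rewrite oppr0 expR0 rmorph1 mulr1 addr0.
  have Ho := chain JoR t0 ler01 Hc0 c0.
  have Hr := Dir_affine (- w^-1) (R0 (- w * (expR t)%:C)) (@Dir_exp R).
  set d' := Num.min d0 (d0 / (nr w + 1)).
  have d'0 : 0 < d' by rewrite lt_min d00 divr_gt0 // ltr_pwDr // nr_ge0.
  have F : forall h : R, 0 <= h -> h < d' ->
      - w^-1 * (expR h)%:C + R0 (- w * (expR t)%:C) = omega (t + h * 1) (w * (expR (- h))%:C + 0).
    move=> h h0; rewrite lt_min => /andP[hd hdw].
    have Dv : D (t + h * 1) (w * (expR (- h))%:C + 0).
      apply: Hd0; first by rewrite mulr1 addr_ge0.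
      + by rewrite mulr1 addrC addKr ger0_norm.
      + rewrite lt_nr addr0.
        have -> : w * (expR (- h))%:C - w = w * (expR (- h) - 1)%:C by rewrite rmorphB rmorph1; ring.
        rewrite nrM nrC.
        have e1 : expR (- h) <= 1 by rewrite expR_le1 oppr_le0.
        have e2 := expR_ge1Dx (- h).
        have nw := nr_ge0 w.
        have hw : h * (nr w + 1) < d0 by rewrite -ltr_pdivlMr // ltr_pwDr.
        rewrite ler0_norm; last lra.
        nra.
    have v0 : - (w * (expR (- h))%:C + 0) != 0.
      by rewrite oppr_eq0 addr0 mulf_neq0 // fmorph_eq0 gt_eqF // expR_gt0.
    have := HR (t + h * 1) _ _ v0; rewrite opprK => /(_ Dv).
    rewrite /Rtransform opprK => E.
    have -> : omega (t + h * 1) (w * (expR (- h))%:C + 0) =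
       R0 (- (w * (expR (- h))%:C + 0) * (expR (t + h * 1))%:C) + (- (w * (expR (- h))%:C + 0))^-1.
      by rewrite -E subrK.
    rewrite addrC; congr (_ + _).
    - congr R0; rewrite mulr1 expRD addr0 !rmorphM /=.
      have K : (expR (- h))%:C * (expR h)%:C = 1 :> R[i] by rewrite -rmorphM mulrC expRxMexpNx_1 rmorph1.
      transitivity (- w * (expR t)%:C * ((expR (- h))%:C * (expR h)%:C)); last by ring.
      by rewrite K mulr1.
    - rewrite addr0 invrN invfM expRN fmorphV invrK; ring.
  apply: Dir_uniq Ho (Dir_ext _ _ Hr).
  - exists d'; split => // h h0 hd; exact: F (ltW h0) hd.
  - exact: F (lexx 0) d'0.
rewrite mz.
rewrite rmorph1 !mulr1 in S3 S1.
have Hal : al = w * be - w^-1.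
  have : al - (w * be - w^-1) = al + be * (w * -1) - (- w^-1) by ring.
  by rewrite S3 subrr => /eqP; rewrite subr_eq0 => /eqP.
have Ha : a = - (b * al) by apply/eqP; rewrite -subr_eq0 opprK S1.
rewrite Ha Hal.
transitivity (- (w * (b * be)) + w^-1 * b); first by ring.
by rewrite S2 mulr1.
Qed.
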